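(* Suppose $a$ and $b$ are integers with $a\le p-1$ and $b\le q-1$, and $s$ is an element of $S$ (or of $R$) which is homogeneous modulo $\vec c$ of degree $a\vec x+b\vec y \bmod \vec c$ (i.e.\ all its monomials have degree congruent to $a\vec x+b\vec y$ in $L/\mathbb{Z}\vec c$). Then: (i) $s$ lies in the ideal $(x^a,y^{q-1+b})\cap(x^{p-1+a},y^b)$; (ii) if $a\le p-2$ then $s$ also lies in $(x^a,y^{q+b})$; (iii) if $b\le q-2$ then $s$ also lies in $(x^{p+a},y^b)$.
   Context: Let $p,q\ge2$ be integers and $W=x^py+xy^q$. Let $L$ be the abelian group generated by $\vec x,\vec y,\vec c$ modulo $p\vec x+\vec y=\vec x+q\vec y=\vec c$; let $S=\mathbb{C}[x,y]$ be $L$-graded with $\deg x=\vec x$, $\deg y=\vec y$, and $R=S/(W)$. *)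

(* Defs.v *)
From mathcomp Require Import all_boot all_algebra.
From mathcomp Require Import reals.
From mathcomp Require Import complex.
From mathcomp Require Export mpoly.
Set Implicit Arguments. Unset Strict Implicit. Unset Printing Implicit Defensive.
Import GRing.Theory Num.Theory.
Local Open Scope ring_scope.

(* The complex numbers: C = R[i] for a (the) complete archimedean real field R. *)
(* S = C[x,y] is {mpoly R[i][2]}, with x = 'X_0 and y = 'X_1. *)
Definition xvar (K : comNzRingType) : {mpoly K[2]} := 'X_(0 : 'I_2).
Definition yvar (K : comNzRingType) : {mpoly K[2]} := 'X_(1 : 'I_2).

(* Power with an integer exponent in the ideal-generator sense:
   t^e for e <= 0 is taken to be 1 (the generator of the unit ideal). *)
Definition ipow (K : comNzRingType) (t : {mpoly K[2]}) (e : int) : {mpoly K[2]} :=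
  match e with Posz n => t ^+ n | Negz _ => 1 end.

Definition in_ideal2 (K : comNzRingType) (f g s : {mpoly K[2]}) : Prop :=
  exists u v : {mpoly K[2]}, s = u * f + v * g.

(* The group L: elements u x + v y + w c, represented by (u,v,w) in Z^3, modulo
   the relations p x + y - c = 0 and x + q y - c = 0.  Two elements of L are
   equal in L / Z c iff their difference lies in the subgroup spanned by
   (p,1,-1), (1,q,-1) and (0,0,1). *)
Definition eq_L_mod_c (p q : nat) (u v w u' v' w' : int) : Prop :=
  exists k l m : int,
    [/\ u - u' = k * p%:Z + l,
        v - v' = k + l * q%:Z
      & w - w' = - k - l + m].

(* deg(x^i y^j) = i x + j y. s is homogeneous modulo c of degree a x + b y:
   every monomial of s has degree congruent to a x + b y in L / Z c. *)
Definition homog_mod_c (K : comNzRingType) (p q : nat) (a b : int)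
    (s : {mpoly K[2]}) : Prop :=
  forall m : 'X_{1..2}, m \in msupp s ->
    eq_L_mod_c p q (m (0 : 'I_2))%:Z (m (1 : 'I_2))%:Z 0 a b 0.

(* Main.v *)
Require Import Defs.
From mathcomp Require Import all_boot all_algebra.
From mathcomp Require Import reals.
From mathcomp Require Import complex.
From mathcomp Require Import mpoly.
From mathcomp Require Import zify.
Import GRing.Theory Num.Theory.
Local Open Scope ring_scope.

Lemma L1 (p q a b i j k l : int) : 2 <= p -> 2 <= q -> a <= p-1 -> b <= q-1 -> 0 <= i -> 0<= j ->
  i - a = k*p + l -> j - b = k + l*q -> a <= i \/ q-1+b <= j.
Proof. intros. destruct (lerP a i); [now left|]. destruct (lerP (q-1+b) j); [now right|].
exfalso. destruct (ltrgtP l 0) as [H7|H7|H7].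
- have ? : (q-2)*(-l-1) >= 0 by nia. have ? : q*(-l-1) >= 0 by nia. have ? : 1 <= k by nia.
  have ? : (p-2)*k >= 0 by nia. nia.
- have ? : k <= -1 by nia.
  have ? : (p-2)*(-k-1) >= 0 by nia. have ? : (l+2*k+1)*q >= 0 by nia. have ? : (-2*k-2)*(q-2)>=0 by nia. nia.
- subst. have ? : k <= -1 by nia. have ? : (-k-1)*p >= 0 by nia. nia.
Qed.

Lemma L3 (p q a b i j k l : int) : 2 <= p -> 2 <= q -> a <= p-2 -> b <= q-1 -> 0 <= i -> 0<= j ->
  i - a = k*p + l -> j - b = k + l*q -> a <= i \/ q+b <= j.
Proof. intros. destruct (lerP a i); [now left|]. destruct (lerP (q+b) j); [now right|].
exfalso. destruct (ltrgtP l 0) as [H7|H7|H7].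
- have ? : (q-2)*(-l-1) >= 0 by nia. have ? : q*(-l-1) >= 0 by nia. have ? : 1 <= k by nia.
  have ? : (p-2)*k >= 0 by nia. nia.
- have ? : k <= -1 by nia.
  have ? : (p-2)*(-k-1) >= 0 by nia. have ? : (l+2*k)*q >= 0 by nia. have ? : (-2*k-1)*(q-2)>=0 by nia. nia.
- subst. have ? : k <= -1 by nia. have ? : (-k-1)*p >= 0 by nia. nia.
Qed.

Section Id.
Variable K : comNzRingType.

Lemma powdiv (t : {mpoly K[2]}) (e : int) (n : nat) :
  e <= n%:Z -> exists w, t ^+ n = w * ipow t e.
Proof.
case: e => [k|k] /= H.
- have Hk : (k <= n)%N by lia.
  by exists (t ^+ (n - k)); rewrite -exprD subnK.
- by exists (t ^+ n); rewrite mulr1.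
Qed.

Lemma monoE (m : 'X_{1..2}) :
  'X_[m] = xvar K ^+ (m (0 : 'I_2)) * yvar K ^+ (m (1 : 'I_2)).
Proof.
rewrite mpolyXE_id !big_ord_recl big_ord0 mulr1 /xvar /yvar.
by congr (_ ^+ _ * _ ^+ _); congr (_ _); apply/val_inj.
Qed.

Lemma ideal_mono (e1 e2 : int) (s : {mpoly K[2]}) :
  (forall m, m \in msupp s -> e1 <= (m (0 : 'I_2))%:Z \/ e2 <= (m (1 : 'I_2))%:Z) ->
  in_ideal2 (ipow (xvar K) e1) (ipow (yvar K) e2) s.
Proof.
move=> H; rewrite (mpolyE s).
elim: (msupp s) H => [|m r IH] H.
  by exists 0, 0; rewrite big_nil !mul0r addr0.
rewrite big_cons.
have [u [v ->]] := IH (fun m' hm => H m' (@mem_behead _ (m :: r) _ hm)).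
rewrite monoE.
case: (H m (mem_head _ _)) => [/(powdiv (xvar K)) [w ->]|/(powdiv (yvar K)) [w ->]].
- exists (s@_m *: (w * yvar K ^+ (m (1 : 'I_2))) + u), v.
  rewrite mulrDl -!scalerAl addrA; congr (_ *: _ + _ + _); by rewrite mulrAC.
- exists u, (s@_m *: (xvar K ^+ (m (0 : 'I_2)) * w) + v).
  rewrite mulrDl -!scalerAl addrCA; congr (_ + (_ *: _ + _)); by rewrite mulrA.
Qed.
End Id.

Theorem lemma2p2 (R : realType) (p q : nat) (a b : int)
    (s : {mpoly R[i][2]}) :
  (2 <= p)%N -> (2 <= q)%N ->
  a <= p%:Z - 1 -> b <= q%:Z - 1 ->
  homog_mod_c p q a b s ->
  [/\ in_ideal2 (ipow (xvar _) a) (ipow (yvar _) (q%:Z - 1 + b)) s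
      /\ in_ideal2 (ipow (xvar _) (p%:Z - 1 + a)) (ipow (yvar _) b) s,
      a <= p%:Z - 2 -> in_ideal2 (ipow (xvar _) a) (ipow (yvar _) (q%:Z + b)) s
    & b <= q%:Z - 2 -> in_ideal2 (ipow (xvar _) (p%:Z + a)) (ipow (yvar _) b) s].
Proof.
move=> hp hq ha hb hs.
have hp' : 2 <= p%:Z by rewrite lez_nat.
have hq' : 2 <= q%:Z by rewrite lez_nat.
have G : forall m, m \in msupp s -> exists k l : int,
    (m (0 : 'I_2))%:Z - a = k * p%:Z + l /\ (m (1 : 'I_2))%:Z - b = k + l * q%:Z.
  move=> m /hs [k [l [n [E1 E2 _]]]]. exists k, l.
  by split.
split; [split| |] => [|||h]; try move=> h; apply: ideal_mono => m /G [k [l [E1 E2]]].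
- have := @L1 p%:Z q%:Z a b (m (0 : 'I_2))%:Z (m (1 : 'I_2))%:Z k l. lia.
- have := @L1 q%:Z p%:Z b a (m (1 : 'I_2))%:Z (m (0 : 'I_2))%:Z l k. lia.
- have := @L3 p%:Z q%:Z a b (m (0 : 'I_2))%:Z (m (1 : 'I_2))%:Z k l. lia.
- have := @L3 q%:Z p%:Z b a (m (1 : 'I_2))%:Z (m (0 : 'I_2))%:Z l k. lia.
Qed.
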